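(* Let $x\in\mathbb X$, $\alpha>0$ and $x_\alpha\in R_\alpha(Ax)$. Then $$\gamma_x\Big(\tfrac1\alpha\|Ax-Ax_\alpha\|_{\mathbb Y}\Big)\le\|Ax-Ax_\alpha\|_{\mathbb Y}\le4\gamma_x\Big(\tfrac1{4\alpha}\|Ax-Ax_\alpha\|_{\mathbb Y}\Big).$$
   Context: Standing setting: $\mathbb X$ real Banach space, $\tau$ a topology with $(\mathbb X,\tau)$ locally convex Hausdorff; $\mathcal R:\mathbb X\to(-\infty,\infty]$ proper convex with $\tau$-compact sublevel sets; $\mathbb Y$ real Hilbert space; $A:\mathbb X\to\mathbb Y$ linear, $\tau$-to-weak continuous. $R_\alpha(g):=\operatorname{argmin}_{x\in\mathrm{dom}(\mathcal R)}(\frac1{2\alpha}\|g-Ax\|_{\mathbb Y}^2+\mathcal R(x))$, $\varrho_1(z):=\sup\{\beta^{-1}\|Az-Az_\beta\|_{\mathbb Y}:\beta>0,z_\beta\in R_\beta(Az)\}$. For $r\ge0$ let $B_r:=\{z\in\mathbb X:\varrho_1(z)\le r\}$ (nonempty, since it contains the minimizers of $\mathcal R$) and $\gamma_x(r):=\inf_{z\in B_r}\|Ax-Az\|_{\mathbb Y}$. *)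

(* Defs.v *)
From HB Require Import structures.
From mathcomp Require Import all_boot all_order all_algebra.
From mathcomp Require Import all_classical all_reals all_analysis.
Set Implicit Arguments. Unset Strict Implicit. Unset Printing Implicit Defensive.
Import Order.TTheory GRing.Theory Num.Theory.
Import numFieldNormedType.Exports.
Local Open Scope classical_set_scope.
Local Open Scope ring_scope.

Section Defs.
Context {R : realType}.

(** [ip] is an inner product on the normed space [Y] inducing its norm;
    a Hilbert space is then a complete normed space with such an [ip]. *)
Definition inner_product (Y : normedModType R) (ip : Y -> Y -> R) : Prop :=
  [/\ forall y z : Y, ip y z = ip z y,
      forall (a : R) (y1 y2 z : Y), ip (a *: y1 + y2) z = a * ip y1 z + ip y2 z
    & forall y : Y, ip y y = `|y| ^+ 2].

Definition dom {X : Type} (F : X -> \bar R) : set X := [set x | (F x < +oo)%E].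

Definition proper_convex {X : lmodType R} (F : X -> \bar R) : Prop :=
  [/\ exists x, (F x < +oo)%E,
      forall x, F x != -oo%E
    & forall (x y : X) (t : R), 0 < t < 1 ->
        (F (t *: x + (1 - t) *: y)%R <= t%:E * F x + (1 - t)%:E * F y)%E].

Section Tikhonov.
Context {X : lmodType R} {Y : normedModType R} (A : X -> Y) (F : X -> \bar R).

(** Tikhonov functional (evaluated on dom F, where F is finite) *)
Definition tikhonov (alpha : R) (g : Y) (x : X) : R :=
  (2 * alpha)^-1 * `|g - A x| ^+ 2 + fine (F x).

Definition Ralpha (alpha : R) (g : Y) : set X :=
  [set x | dom F x /\ forall z, dom F z -> tikhonov alpha g x <= tikhonov alpha g z].

Definition rho1 (z : X) : \bar R :=
  ereal_sup [set e | exists beta zb, [/\ 0 < beta, Ralpha beta (A z) zb &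
                                      e = (beta^-1 * `|A z - A zb|)%:E]].

Definition Bset (r : R) : set X := [set z | (rho1 z <= r%:E)%E].

Definition gamma (x : X) (r : R) : \bar R :=
  ereal_inf [set (`|A x - A z|)%:E | z in Bset r].

End Tikhonov.
End Defs.

(* Main.v *)
Set Warnings "-all".
Require Import Defs.
From HB Require Import structures.
From mathcomp Require Import all_boot all_order all_algebra.
From mathcomp Require Import all_classical all_reals all_analysis.
From mathcomp Require Import ring lra.
Import Order.TTheory GRing.Theory Num.Theory.
Import numFieldNormedType.Exports.
Local Open Scope classical_set_scope.
Local Open Scope ring_scope.

Section IP.
Context {R : realType} {Y : normedModType R} (ip : Y -> Y -> R)
  (hip : inner_product ip).

Lemma ipD1 y1 y2 z : ip (y1 + y2) z = ip y1 z + ip y2 z.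
Proof. by case: hip => _ h _; have := h 1 y1 y2 z; rewrite scale1r mul1r. Qed.

Lemma ip01 z : ip 0 z = 0.
Proof. have h := ipD1 0 0 z; rewrite addr0 in h; lra. Qed.

Lemma ipZ1 a y z : ip (a *: y) z = a * ip y z.
Proof. by case: hip => _ h _; rewrite -(addr0 (a *: y)) h ip01 addr0. Qed.

Lemma ipC y z : ip y z = ip z y.
Proof. by case: hip. Qed.

Lemma ipD2 y z1 z2 : ip y (z1 + z2) = ip y z1 + ip y z2.
Proof. by rewrite ipC ipD1 ipC (ipC z2). Qed.

Lemma ipZ2 a y z : ip y (a *: z) = a * ip y z.
Proof. by rewrite ipC ipZ1 ipC. Qed.

Lemma ipN1 y z : ip (- y) z = - ip y z.
Proof. by rewrite -scaleN1r ipZ1 mulN1r. Qed.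

Lemma ipN2 y z : ip y (- z) = - ip y z.
Proof. by rewrite ipC ipN1 ipC. Qed.

Lemma ipB1 y1 y2 z : ip (y1 - y2) z = ip y1 z - ip y2 z.
Proof. by rewrite ipD1 ipN1. Qed.

Lemma ipB2 y z1 z2 : ip y (z1 - z2) = ip y z1 - ip y z2.
Proof. by rewrite ipD2 ipN2. Qed.

Lemma ipnn y : ip y y = `|y| ^+ 2.
Proof. by case: hip. Qed.

Lemma ip_CS y z : ip y z <= `|y| * `|z|.
Proof.
have h : ip (y + z) (y + z) = ip y y + 2 * ip y z + ip z z.
  by rewrite ipD1 !ipD2 (ipC z y); ring.
have t : `|y + z| <= `|y| + `|z| := ler_normD y z.
have t2 : `|y + z| ^+ 2 <= (`|y| + `|z|) ^+ 2.
  by rewrite lerXn2r // nnegrE // addr_ge0.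
move: h t2; rewrite !ipnn => ->; nra.
Qed.

End IP.

Section VI.
Context {R : realType} {X : lmodType R} {Y : normedModType R} (ip : Y -> Y -> R)
  (hip : inner_product ip) (A : {linear X -> Y}) (F : X -> \bar R)
  (hF : proper_convex F).

Lemma domE w : dom F w -> F w = (fine (F w))%:E.
Proof.
move=> hw; rewrite fineK // fin_numE; case: hF => _ h _.
by rewrite h /= lt_eqF.
Qed.

Lemma small_t (a b c : R) : 0 <= c ->
  (forall t, 0 < t < 1 -> a <= b + t * c) -> a <= b.
Proof.
move=> c0 h; apply/ler_addgt0Pr => e e0.
have t0 : 0 < e / (e + c + 1) by rewrite divr_gt0 // ltr_wpDr // ltr_pwDl.
have t1 : e / (e + c + 1) < 1 by rewrite ltr_pdivrMr ?mul1r; lra.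
apply: (le_trans (h (e / (e + c + 1)) _)); first by rewrite t0 t1.
rewrite lerD2l; rewrite mulrAC ler_pdivrMr; last lra.
nra.
Qed.

Lemma VI alpha g z w : 0 < alpha -> Ralpha A F alpha g z -> dom F w ->
  alpha^-1 * ip (g - A z) (A w - A z) <= fine (F w) - fine (F z).
Proof.
move=> ha [hz hmin] hw.
set y := g - A z; set u := A w - A z.
set fw := fine (F w); set fz := fine (F z).
have Fw := domE _ hw; have Fz := domE _ hz.
apply: (@small_t _ _ ((2 * alpha)^-1 * `|u| ^+ 2)).
  by rewrite mulr_ge0 // invr_ge0; lra.
move=> t /andP[t0 t1].
set v := t *: w + (1 - t) *: z.
have hv : (F v <= (t * fw + (1 - t) * fz)%:E)%E.
  case: hF => _ _ h; apply: (le_trans (h w z t _)); first by rewrite t0 t1.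
  by rewrite Fw Fz -!EFinM -EFinD.
have dv : dom F v by apply: (le_lt_trans hv); rewrite ltry.
have fv : fine (F v) <= t * fw + (1 - t) * fz by rewrite -lee_fin -domE.
have := hmin v dv; rewrite /tikhonov -/fz.
have -> : g - A v = y - t *: u.
  rewrite /v linearD !linearZ /y /u /=.
  rewrite scalerBl scale1r scalerN scalerBr !opprD !opprK !addrA.
  by congr (_ + _); rewrite addrAC.
have Eq : `|y - t *: u| ^+ 2 = `|y| ^+ 2 - 2 * t * ip y u + t ^+ 2 * `|u| ^+ 2.
  clearbody y u.
  rewrite -(ipnn ip hip (y - t *: u)) -(ipnn ip hip y) -(ipnn ip hip u).
  rewrite (ipB1 ip hip) !(ipB2 ip hip) !(ipZ1 ip hip) !(ipZ2 ip hip) (ipC ip hip u y).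
  by rewrite expr2; ring.
rewrite -/y Eq => H.
set P := ip y u in H *.
have ai : 0 < alpha^-1 by rewrite invr_gt0.
have e2 : (2 * alpha)^-1 = alpha^-1 / 2 by rewrite invfM mulrC.
rewrite e2 in H *.
set a := alpha^-1 in H ai *.
have H2 : t * (a * P) <= t * (fw - fz + t * (a / 2 * `|u| ^+ 2)).
  move: H fv; set N := `|y| ^+ 2; set U := `|u| ^+ 2; set fV := fine (F v) => H fv.
  rewrite -subr_le0.
  have -> : t * (a * P) - t * (fw - fz + t * (a / 2 * U)) =
    ((a / 2 * N + fz) - (a / 2 * (N - 2 * t * P + t ^+ 2 * U) + fV))
    + (fV - (t * fw + (1 - t) * fz)) by field.
  by rewrite -[0]addr0 lerD // subr_le0.
by rewrite ler_pM2l in H2.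
Qed.

Lemma sq_le (n k : R) : 0 <= n -> 0 <= k -> n ^+ 2 <= k * n -> n <= k.
Proof. move=> n0 k0 h; rewrite expr2 in h; nra. Qed.

Lemma rho_le beta z p zb : 0 < beta -> dom F z ->
  (forall w, dom F w -> ip p (A w - A z) <= fine (F w) - fine (F z)) ->
  Ralpha A F beta (A z) zb -> `|A z - A zb| <= beta * `|p|.
Proof.
move=> hb dz hp hzb.
have h1 := VI _ _ _ _ hb hzb dz.
have h2 := hp _ (proj1 hzb).
set v := A z - A zb in h1 *.
have e : A zb - A z = - v by rewrite opprB.
rewrite e (ipN2 ip hip) in h2.
rewrite (ipnn ip hip) in h1.
have h3 : beta^-1 * `|v| ^+ 2 <= ip p v by lra.
have h4 := ip_CS ip hip p v.
apply: sq_le; [exact: normr_ge0 | by rewrite mulr_ge0 ?normr_ge0 // ltW |].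
rewrite -mulrA -ler_pdivrMl //; exact: le_trans h3 h4.
Qed.

Lemma nonexp alpha g1 g2 x1 x2 : 0 < alpha -> Ralpha A F alpha g1 x1 ->
  Ralpha A F alpha g2 x2 -> `|A x1 - A x2| <= `|g1 - g2|.
Proof.
move=> ha h1 h2.
have k1 := VI _ _ _ _ ha h1 (proj1 h2).
have k2 := VI _ _ _ _ ha h2 (proj1 h1).
have k : alpha^-1 * (ip (g1 - A x1) (A x2 - A x1) + ip (g2 - A x2) (A x1 - A x2)) <= 0.
  rewrite mulrDr; lra.
rewrite pmulr_rle0 ?invr_gt0 // in k.
set u := A x1 - A x2 in k *.
have e : A x2 - A x1 = - u by rewrite opprB.
rewrite e (ipN2 ip hip) in k.
have e2 : ip (g2 - A x2) u - ip (g1 - A x1) u = `|u| ^+ 2 - ip (g1 - g2) u.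
  rewrite -(ipnn ip hip) /u !(ipB1 ip hip); ring.
have h4 := ip_CS ip hip (g1 - g2) u.
apply: sq_le; [exact: normr_ge0 | exact: normr_ge0 |].
lra.
Qed.

End VI.

Lemma Qlsc (R : realType) (X : lmodType R) (E : tvsType R) (kappa : E -> X)
  (Y : normedModType R) (ip : Y -> Y -> R) (hip : inner_product ip)
  (A : {linear X -> Y})
  (hA : forall z : Y, continuous (fun e : E => ip (A (kappa e)) z))
  (alpha : R) (ha : 0 < alpha) (g : Y) (p : E) (b : R) :
  b < (2 * alpha)^-1 * `|g - A (kappa p)| ^+ 2 ->
  nbhs p [set e | b < (2 * alpha)^-1 * `|g - A (kappa e)| ^+ 2].
Proof.
move=> hb.
have a2 : 0 < 2 * alpha by rewrite mulr_gt0.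
have [b0|b0] := ltP b 0.
  apply: filterS filterT => e _ /=.
  apply: (lt_le_trans b0); apply: mulr_ge0; first by rewrite invr_ge0 ltW.
  exact: sqr_ge0.
set y := g - A (kappa p).
move: hb; rewrite ltr_pdivlMl // => hb.
set cc := 2 * alpha * b in hb.
set a0 := `|y| ^+ 2 in hb.
have cc0 : 0 <= cc by rewrite mulr_ge0 // ltW.
set t := (a0 + cc) / 2.
have hk : (fun e => ip g y - ip (A (kappa e)) y) @ p --> (ip g y - ip (A (kappa p)) y).
  exact: cvgB (cvg_cst _) (hA y p).
have tlt : t < ip g y - ip (A (kappa p)) y.
  rewrite -(ipB1 ip hip) -/y (ipnn ip hip) -/a0 /t; lra.
have hnear := cvgr_gt _ hk _ tlt.
suff key : forall e, t < ip g y - ip (A (kappa e)) y ->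
  b < (2 * alpha)^-1 * `|g - A (kappa e)| ^+ 2.
  by apply: (filterS key); apply: hnear; apply: nbhs_filter.
move=> e he.
rewrite ltr_pdivlMl //.
set N := `|g - A (kappa e)|.
have hN : ip (g - A (kappa e)) y <= N * `|y| := ip_CS ip hip _ _.
rewrite (ipB1 ip hip) in hN.
have N0 : 0 <= N by exact: normr_ge0.
have Y0 : 0 <= `|y| by exact: normr_ge0.
have ea0 : a0 = `|y| * `|y| by rewrite /a0 expr2.
have et : t = (a0 + cc) / 2 by [].
clearbody t N a0.
rewrite expr2 -/cc.
set k := ip g y - ip (A (kappa e)) y in he hN.
clearbody k.
have t0 : 0 < t by rewrite et; lra.
have h1 : t < N * `|y| by lra.
have h2 : t * t < (N * `|y|) * (N * `|y|) by nra.
have h3 : a0 * cc < t * t by rewrite et; nra.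
have a00 : 0 < a0 by lra.
have h4 : a0 * cc < a0 * (N * N) by rewrite ea0; nra.
by rewrite ltr_pM2l in h4.
Qed.

Lemma tik_ge (R : realType) (X : lmodType R) (Y : normedModType R) (A : X -> Y)
  (F : X -> \bar R) alpha g x : 0 < alpha -> fine (F x) <= tikhonov A F alpha g x.
Proof.
move=> ha; rewrite /tikhonov lerDr; apply: mulr_ge0; last exact: sqr_ge0.
by rewrite invr_ge0 mulr_ge0 // ltW.
Qed.

Lemma exists_min (R : realType) (X : lmodType R)
  (E : tvsType R) (iota : X -> E) (kappa : E -> X)
  (hik : cancel iota kappa) (hki : cancel kappa iota)
  (hE : hausdorff_space E)
  (F : X -> \bar R) (hF : proper_convex F)
  (hcomp : forall c : R, compact (iota @` [set x | (F x <= c%:E)%E]))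
  (Y : normedModType R) (ip : Y -> Y -> R) (hip : inner_product ip)
  (A : {linear X -> Y})
  (hA : forall z : Y, continuous (fun e : E => ip (A (kappa e)) z))
  (alpha : R) (ha : 0 < alpha) (g : Y) : exists z, Ralpha A F alpha g z.
Proof.
have fin : forall x, dom F x -> F x = (fine (F x))%:E by move=> x; exact: domE.
have nNy : forall x, F x != -oo%E by case: hF.
pose T' e := tikhonov A F alpha g (kappa e).
have [x0 hx0] : exists x0, dom F x0 by case: hF.
set c := tikhonov A F alpha g x0.
set K := iota @` [set x | (F x <= c%:E)%E].
have KP : forall e, K e -> (F (kappa e) <= c%:E)%E.
  by move=> e [x hx <-]; rewrite hik.
have Ki : forall x, (F x <= c%:E)%E -> K (iota x) by move=> x hx; exists x.
have Kdom : forall e, K e -> dom F (kappa e).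
  by move=> e /KP he; apply: (le_lt_trans he); rewrite ltry.
have Kx0 : K (iota x0).
  by apply: Ki; rewrite fin // lee_fin; exact: tik_ge.
pose B w := [set e | K e /\ T' e <= T' w].
have Ff : Filter (filter_from K B).
  apply: filter_from_filter; first by exists (iota x0).
  move=> i j Ki' Kj'; have [ij|ji] := leP (T' i) (T' j).
    exists i => // e [Ke he]; split; split => //; exact: le_trans he ij.
  exists j => // e [Ke he]; split; split => //; exact: le_trans he (ltW ji).
have Pf : ProperFilter (filter_from K B).
  apply: (filter_from_proper Ff).
  by move=> i Ki'; exists i; split.
have FK : filter_from K B K by exists (iota x0) => // e [].
have [p [Kp clp]] := hcomp c _ Pf FK.
have minp : forall w, K w -> T' p <= T' w.
  move=> w Kw; rewrite leNgt; apply/negP => hlt.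
  set d := T' p - T' w.
  have d0 : 0 < d by rewrite /d subr_gt0.
  set Fp := fine (F (kappa p)).
  set Qp := (2 * alpha)^-1 * `|g - A (kappa p)| ^+ 2.
  have eTp : T' p = Qp + Fp by [].
  have hQ : Qp - d / 2 < Qp by lra.
  have U2 := @Qlsc _ _ _ _ _ _ hip _ hA _ ha g p _ hQ.
  have U1 : nbhs p [set e | ~ (F (kappa e) <= (Fp - d / 2)%:E)%E].
    have cl := compact_closed hE (hcomp (Fp - d / 2)).
    have np : ~ (iota @` [set x | (F x <= (Fp - d / 2)%:E)%E]) p.
      move=> [x hx ex]; have kx : kappa p = x by rewrite -ex hik.
      move: hx; rewrite -kx.
      rewrite /= (fin _ (Kdom _ Kp)) lee_fin -/Fp; lra.
    have : ~ closure (iota @` [set x | (F x <= (Fp - d / 2)%:E)%E]) p.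
      by move=> /cl.
    move=> /existsNP [U /not_implyP [hU hempty]].
    apply: filterS hU => e Ue hle; apply: hempty; exists e; split => //.
    by exists (kappa e) => //; rewrite hki.
  have [e [[Ke hTe] [U1e U2e]]] := clp _ _ (ex_intro2 _ _ w Kw (fun e h => h)) (filterI U1 U2).
  move: U1e; rewrite /= (fin _ (Kdom _ Ke)) lee_fin => /negP; rewrite -ltNge => U1e.
  have eTe : T' e = (2 * alpha)^-1 * `|g - A (kappa e)| ^+ 2 + fine (F (kappa e)) by [].
  move: U2e; rewrite /= => U2e.
  have : T' w < T' e by rewrite eTe; rewrite /d eTp in U1e U2e *; lra.
  by rewrite ltNge hTe.
exists (kappa p); split; first exact: Kdom.
move=> w dw.
have [hw|hw] := boolP (F w <= c%:E)%E.
  by have := minp _ (Ki _ hw); rewrite /T' hik.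
apply: (le_trans (minp _ Kx0)); rewrite /T' hik -/c.
move: hw; rewrite (fin _ dw) lee_fin -ltNge => hw.
apply: ltW; apply: (lt_le_trans hw); exact: tik_ge.
Qed.

Theorem proposition4p8
  (R : realType) (X : completeNormedModType R)
  (E : tvsType R) (iota : {linear X -> E}) (kappa : E -> X)
  (hik : cancel iota kappa) (hki : cancel kappa iota)
  (hE : hausdorff_space E)
  (F : X -> \bar R) (hF : proper_convex F)
  (hcomp : forall c : R, compact (iota @` [set x | (F x <= c%:E)%E]))
  (Y : completeNormedModType R) (ip : Y -> Y -> R) (hip : inner_product ip)
  (A : {linear X -> Y})
  (hA : forall z : Y, continuous (fun e : E => ip (A (kappa e)) z))
  (x : X) (alpha : R) (halpha : 0 < alpha)
  (xa : X) (hxa : Ralpha A F alpha (A x) xa) :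
  (gamma A F x (alpha^-1 * `|(A x - A xa)%R|) <= (`|(A x - A xa)%R|)%:E
   /\ (`|(A x - A xa)%R|)%:E <= 4%:E * gamma A F x ((4 * alpha)^-1 * `|(A x - A xa)%R|))%E.
Proof.
set d := `|A x - A xa|.
have d0 : 0 <= d by exact: normr_ge0.
have ai : 0 < alpha^-1 by rewrite invr_gt0.
split.
  apply: ge_ereal_inf; exists d%:E => //; exists xa => //.
  rewrite /Bset /= /rho1; apply: ge_ereal_sup => _ [beta [zb [hb hzb ->]]].
  rewrite lee_fin.
  set p := alpha^-1 *: (A x - A xa).
  have hp : forall w, dom F w -> ip p (A w - A xa) <= fine (F w) - fine (F xa).
    move=> w dw; rewrite /p (ipZ1 ip hip); exact: VI.
  have := rho_le _ hip _ _ hF _ _ _ _ hb (proj1 hxa) hp hzb.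
  rewrite /p normrZ gtr0_norm // -/d => h.
  by rewrite ler_pdivrMl // mulrC.
have key : ((d / 4)%:E <= gamma A F x ((4 * alpha)^-1 * d))%E.
  apply: le_ereal_inf_tmp => _ [z hz <-]; rewrite lee_fin.
  have [za hza] := exists_min _ _ _ _ _ hik hki hE _ hF hcomp _ _ hip _ hA _ halpha (A z).
  have h1 : alpha^-1 * `|A z - A za| <= (4 * alpha)^-1 * d.
    rewrite -lee_fin; apply: le_trans hz; apply: le_ereal_sup_tmp.
    by exists (alpha^-1 * `|A z - A za|)%:E => //; exists alpha, za.
  have h2 := nonexp _ hip _ _ hF _ _ _ _ _ halpha hxa hza.
  have e : A x - A xa = (A x - A z) + (A z - A za) + (A za - A xa).
    by rewrite !addrA subrK subrK.
  have h3 : d <= `|A x - A z| + `|A z - A za| + `|A za - A xa|.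
    rewrite /d e; apply: (le_trans (ler_normD _ _)); rewrite lerD2r.
    exact: ler_normD.
  rewrite (distrC (A za)) in h3.
  rewrite ler_pdivrMl // in h1.
  have ee : alpha * ((4 * alpha)^-1 * d) = d / 4.
    by field; rewrite gt_eqF.
  rewrite ee in h1.
  lra.
apply: le_trans (lee_wpmul2l _ key); last by rewrite lee_fin.
by rewrite -EFinM mulrC divfK.
Qed.
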